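(* Let $\mathcal C$ be a category and $n\ge0$. Every isomorphism in $Z^n(\mathcal C)$ is a degeneracy map.
   Context: Notation: for $n\ge 0$, $[n]$ denotes $\{0,\dots,n-1\}$; $\Delta_+$ is the category of these finite total orders and order-preserving maps. For monotone $\varphi:[n]\to[m]$ define $\hat\varphi:[m+1]\to[n+1]$ by $\hat\varphi(i)=\min(\{j\in[n]:\varphi(j)\ge i\}\cup\{n\})$. Zigzags: in a category $\mathcal C$, a zigzag $X$ of length $n$ is a diagram $X(r_0)\xrightarrow{x_0} X(s_0)\xleftarrow{x'_0} X(r_1)\to\cdots\xrightarrow{x_{n-1}} X(s_{n-1})\xleftarrow{x'_{n-1}} X(r_n)$. A zigzag map $f:X\to Y$ (lengths $n$, $m$) consists of a monotone $f_s:[n]\to[m]$, regular slices $f(r_i):X(r_{\hat{f_s}(i)})\to Y(r_i)$ for $0\le i\le m$ and singular slices $f(s_j):X(s_j)\to Y(s_{f_s(j)})$ for $0\le j<n$, such that for each $0\le i<m$: if $f_s^{-1}(i)\neq\emptyset$ with least element $p$, greatest $q$, then $f(s_p)\circ x_p=y_i\circ f(r_i)$, $f(s_q)\circ x'_q=y'_i\circ f(r_{i+1})$, $f(s_j)\circ x'_j=f(s_{j+1})\circ x_{j+1}$ for $p\le j<q$; if $f_s^{-1}(i)=\emptyset$ then $y_i\circ f(r_i)=y'_i\circ f(r_{i+1})$. Composition: $(g\circ f)_s=g_s\circ f_s$, $(g\circ f)(s_j)=g(s_{f_s(j)})\circ f(s_j)$, $(g\circ f)(r_i)=g(r_i)\circ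 f(r_{\hat{g_s}(i)})$. This gives a category $Z(\mathcal C)$; $Z^0(\mathcal C)=\mathcal C$, $Z^n(\mathcal C)=Z(Z^{n-1}(\mathcal C))$. $\pi:Z(\mathcal C)\to\Delta_+$ sends a zigzag of length $n$ to $[n]$ and $f$ to $f_s$; $f$ is $\pi$-vertical if $\pi(f)$ is an identity; $f:x\to y$ is $\pi$-cocartesian if for every $h:x\to y'$ and $u:\pi(y)\to\pi(y')$ with $u\circ\pi(f)=\pi(h)$ there is a unique $v:y\to y'$ with $v\circ f=h$, $\pi(v)=u$. Degeneracy maps in $Z^n(\mathcal C)$ (by induction on $n$): in $Z^0(\mathcal C)$ the isomorphisms; for $n\ge1$ the maps generated under composition by simple degeneracy maps (the $\pi$-cocartesian maps $f$ with $\pi(f)$ a monomorphism of $\Delta_+$) and parallel degeneracy maps (the $\pi$-vertical maps whose regular and singular slices are all degeneracy maps in $Z^{n-1}(\mathcal C)$). *)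

(* Defs.v *)
(* Categories are presented in the single-sorted
   style: a type of objects, a type of arrows, dom/cod, identities, and a
   total composition operation that is only meaningful on composable pairs;
   predicates [isObj]/[isArr] carve out the actual objects/arrows. *)
From mathcomp Require Import all_boot.
Set Implicit Arguments. Unset Strict Implicit. Unset Printing Implicit Defensive.

Record Cat := {
  Obj : Type;
  Arr : Type;
  isObj : Obj -> Prop;
  isArr : Arr -> Prop;
  dom : Arr -> Obj;
  cod : Arr -> Obj;
  idt : Obj -> Arr;
  comp : Arr -> Arr -> Arr  (* comp g f = g \o f *)
}.
Arguments isObj c _ : clear implicits.
Arguments isArr c _ : clear implicits.
Arguments dom c _ : clear implicits.
Arguments cod c _ : clear implicits.
Arguments idt c _ : clear implicits.
Arguments comp c _ _ : clear implicits.

Definition is_category (C : Cat) : Prop :=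
  (forall x, isObj C x ->
     isArr C (idt C x) /\ dom C (idt C x) = x /\ cod C (idt C x) = x) /\
  (forall f, isArr C f -> isObj C (dom C f) /\ isObj C (cod C f)) /\
  (forall f g, isArr C f -> isArr C g -> cod C f = dom C g ->
     isArr C (comp C g f) /\ dom C (comp C g f) = dom C f /\
     cod C (comp C g f) = cod C g) /\
  (forall f, isArr C f ->
     comp C f (idt C (dom C f)) = f /\ comp C (idt C (cod C f)) f = f) /\
  (forall f g h, isArr C f -> isArr C g -> isArr C h ->
     cod C f = dom C g -> cod C g = dom C h ->
     comp C h (comp C g f) = comp C (comp C h g) f).

Definition is_iso (C : Cat) (f : Arr C) : Prop :=
  isArr C f /\ exists g : Arr C, isArr C g /\ dom C g = cod C f /\ cod C g = dom C f /\
    comp C g f = idt C (dom C f) /\ comp C f g = idt C (cod C f).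

Arguments is_iso C f : clear implicits.

Definition nthf (A : Type) (k : nat) (h : 'I_k -> A) (d : A) (x : nat) : A :=
  match @insub nat (fun x => x < k) _ x with Some i => h i | None => d end.

(* Monotone maps [n] -> [m] of Delta_+ are represented as h : 'I_n -> nat. *)
Definition monmap (n m : nat) (h : 'I_n -> nat) : Prop :=
  (forall j, h j < m) /\ (forall j k : 'I_n, j <= k -> h j <= h k).

(* hat phi (i) = min ({j in [n] | phi j >= i} U {n}) *)
Definition hat (n : nat) (h : 'I_n -> nat) (i : nat) : nat :=
  find (fun j => i <= nthf h 0 j) (iota 0 n).

Definition mono_Delta (n m : nat) (h : 'I_n -> nat) : Prop :=
  forall k (a b : 'I_k -> nat), monmap n a -> monmap n b ->
    (forall t, nthf h 0 (a t) = nthf h 0 (b t)) -> forall t, a t = b t.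

Section Zigzag.
Variable C : Cat.

(* A zigzag X(r_0) -x_0-> X(s_0) <-x'_0- X(r_1) -> ... <- X(r_n). *)
Record zz := {
  zlen : nat;
  zr : 'I_zlen.+1 -> Obj C;
  zs : 'I_zlen -> Obj C;
  zx : 'I_zlen -> Arr C;
  zx' : 'I_zlen -> Arr C
}.

Local Arguments zr z _ : clear implicits.
Local Arguments zs z _ : clear implicits.
Local Arguments zx z _ : clear implicits.
Local Arguments zx' z _ : clear implicits.

Definition zz_valid (X : zz) : Prop :=
  (forall i, isObj C (zr X i)) /\ (forall j, isObj C (zs X j)) /\
  (forall j : 'I_(zlen X),
     isArr C (zx X j) /\ isArr C (zx' X j) /\
     dom C (zx X j) = zr X (widen_ord (leqnSn _) j) /\ cod C (zx X j) = zs X j /\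
     dom C (zx' X j) = zr X (lift ord0 j) /\ cod C (zx' X j) = zs X j).

(* Raw zigzag map data: f_s, regular slices f(r_i), singular slices f(s_j). *)
Record zmap := {
  zsrc : zz;
  ztgt : zz;
  zfs : 'I_(zlen zsrc) -> nat;
  zfr : 'I_(zlen ztgt).+1 -> Arr C;
  zfsing : 'I_(zlen zsrc) -> Arr C
}.

Local Arguments zfs z _ : clear implicits.
Local Arguments zfr z _ : clear implicits.
Local Arguments zfsing z _ : clear implicits.

Definition zmap_valid (f : zmap) : Prop :=
  let X := zsrc f in let Y := ztgt f in
  let n := zlen X in let m := zlen Y in
  let d := zfr f ord0 in
  zz_valid X /\ zz_valid Y /\ monmap m (zfs f) /\
  (forall i : 'I_m.+1, isArr C (zfr f i) /\
     dom C (zfr f i) = nthf (zr X) (zr X ord0) (hat (zfs f) i) /\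
     cod C (zfr f i) = zr Y i) /\
  (forall j : 'I_n, isArr C (zfsing f j) /\
     dom C (zfsing f j) = zs X j /\
     cod C (zfsing f j) = nthf (zs Y) (zr Y ord0) (zfs f j)) /\
  (forall i : 'I_m,
     ((forall j : 'I_n, zfs f j <> i) ->
        comp C (zx Y i) (zfr f (widen_ord (leqnSn _) i)) =
        comp C (zx' Y i) (zfr f (lift ord0 i))) /\
     (forall p q : 'I_n, zfs f p = i -> zfs f q = i ->
        (forall j : 'I_n, zfs f j = i -> p <= j <= q) ->
        comp C (zfsing f p) (zx X p) = comp C (zx Y i) (zfr f (widen_ord (leqnSn _) i)) /\
        comp C (zfsing f q) (zx' X q) = comp C (zx' Y i) (zfr f (lift ord0 i)) /\
        (forall j : nat, p <= j < q ->
           comp C (nthf (zfsing f) d j) (nthf (zx' X) d j) =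
           comp C (nthf (zfsing f) d j.+1) (nthf (zx X) d j.+1)))).

Definition zid (X : zz) : zmap :=
  {| zsrc := X; ztgt := X; zfs := fun j => val j;
     zfr := fun i => idt C (zr X i); zfsing := fun j => idt C (zs X j) |}.

Definition zcomp (g f : zmap) : zmap :=
  {| zsrc := zsrc f; ztgt := ztgt g;
     zfs := fun j => nthf (zfs g) 0 (zfs f j);
     zfr := fun i => comp C (zfr g i)
                       (nthf (zfr f) (zfr f ord0) (hat (zfs g) i));
     zfsing := fun j => comp C (nthf (zfsing g) (zfr g ord0) (zfs f j))
                              (zfsing f j) |}.

End Zigzag.
Arguments zr {C} z _.
Arguments zs {C} z _.
Arguments zx {C} z _.
Arguments zx' {C} z _.
Arguments zfs {C} z _.
Arguments zfr {C} z _.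
Arguments zfsing {C} z _.

Definition Z (C : Cat) : Cat :=
  {| Obj := zz C; Arr := zmap C; isObj := @zz_valid C; isArr := @zmap_valid C;
     dom := @zsrc C; cod := @ztgt C; idt := @zid C; comp := @zcomp C |}.

Fixpoint Zn (n : nat) (C : Cat) : Cat :=
  match n with 0 => C | k.+1 => Z (Zn k C) end.

Section Degeneracy.
Variable C : Cat.
Local Notation ZC := (Z C).

(* pi : Z(C) -> Delta_+ ; f is pi-vertical if pi(f) is an identity *)
Definition pi_vertical (f : zmap C) : Prop :=
  zlen (zsrc f) = zlen (ztgt f) /\ forall j, zfs f j = val j.

Definition pi_cocartesian (f : zmap C) : Prop :=
  forall (h : zmap C) (u : 'I_(zlen (ztgt f)) -> nat),
    zmap_valid h -> zsrc h = zsrc f ->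
    monmap (zlen (ztgt h)) u ->
    (forall j : 'I_(zlen (zsrc f)), nthf u 0 (zfs f j) = nthf (zfs h) 0 j) ->
    exists! v : zmap C, zmap_valid v /\ zsrc v = ztgt f /\ ztgt v = ztgt h /\
      zcomp v f = h /\ (forall i : 'I_(zlen (ztgt f)), nthf (zfs v) 0 i = u i).

Definition simple_degeneracy (f : zmap C) : Prop :=
  zmap_valid f /\ pi_cocartesian f /\ mono_Delta (zlen (ztgt f)) (zfs f).

Definition parallel_degeneracy (deg : Arr C -> Prop) (f : zmap C) : Prop :=
  zmap_valid f /\ pi_vertical f /\
  (forall i, deg (zfr f i)) /\ (forall j, deg (zfsing f j)).

Inductive comp_closure (G : zmap C -> Prop) : zmap C -> Prop :=
  | cc_gen f : G f -> comp_closure G f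
  | cc_comp f g : comp_closure G f -> comp_closure G g ->
      zsrc g = ztgt f -> comp_closure G (zcomp g f).

End Degeneracy.

Fixpoint degeneracy (C : Cat) (n : nat) : Arr (Zn n C) -> Prop :=
  match n return Arr (Zn n C) -> Prop with
  | 0 => fun f => is_iso (Zn 0 C) f
  | k.+1 => fun f => comp_closure
      (fun g => simple_degeneracy g \/
                parallel_degeneracy (@degeneracy C k) g) f
  end.
Arguments degeneracy C n f : clear implicits.

(* Main.v *)
Require Import Defs.
From mathcomp Require Import all_boot.
Set Implicit Arguments. Unset Strict Implicit.

Lemma nthf_val A k (h : 'I_k -> A) d (j : 'I_k) : nthf h d j = h j.
Proof. by rewrite /nthf valK. Qed.

Lemma nthf_lt A k (h : 'I_k -> A) d j (Hj : j < k) : nthf h d j = h (Ordinal Hj).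
Proof. by rewrite -(@nthf_val _ _ h d (Ordinal Hj)). Qed.

Lemma find_iota_ge (P : pred nat) a n i : a <= i <= a + n ->
  (forall j, a <= j < a + n -> P j = (i <= j)) -> find P (iota a n) = i - a.
Proof.
elim: n a => [|n IH] a /andP [H1 H2] HP /=.
  by rewrite addn0 in H2; apply/esym/eqP; rewrite subn_eq0.
rewrite HP; last by rewrite leqnn /= addnS ltnS leq_addr.
case: (ltngtP a i) => H; last first.
- by rewrite H subnn.
- by move: H1; rewrite leqNgt H.
rewrite IH //.
- by rewrite subnS prednK // subn_gt0.
- by rewrite H /= addSnnS.
- by move=> j /andP [Hj1 Hj2]; apply: HP; rewrite (ltnW Hj1) /= -addSnnS.
Qed.

Lemma mono_ge n (h : 'I_n -> nat) :
  (forall j k : 'I_n, j < k -> h j < h k) -> forall j : 'I_n, j <= h j.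
Proof.
move=> Hm [j Hj] /=; elim: j Hj => // j IH Hj.
have Hj' : j < n by apply: ltnW.
apply: leq_ltn_trans (IH Hj') _; exact: Hm.
Qed.

Lemma strict_of n m (h : 'I_n -> nat) (h' : 'I_m -> nat) :
  monmap m h -> (forall j, nthf h' 0 (h j) = j) ->
  forall j k : 'I_n, j < k -> h j < h k.
Proof.
case=> _ Hm Hinv j k Hjk; rewrite ltn_neqAle Hm ?(ltnW Hjk) // andbT.
apply/negP => /eqP E; have := Hinv j; rewrite E Hinv => /eqP.
by rewrite eqn_leq leqNgt Hjk.
Qed.

Lemma len_le n m (h : 'I_n -> nat) (h' : 'I_m -> nat) :
  monmap m h -> (forall j, nthf h' 0 (h j) = j) -> n <= m.
Proof.
move=> Hm Hi; rewrite leqNgt; apply/negP => Hmn.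
have := mono_ge (strict_of Hm Hi) (Ordinal Hmn).
by rewrite /= leqNgt (proj1 Hm).
Qed.

Lemma fs_id n m (h : 'I_n -> nat) (h' : 'I_m -> nat) :
  monmap m h -> monmap n h' -> (forall j, nthf h' 0 (h j) = j) ->
  (forall j, nthf h 0 (h' j) = j) -> forall j, h j = j.
Proof.
move=> Hm Hm' Hi Hi' j; apply/eqP; rewrite eqn_leq mono_ge ?andbT; last exact: strict_of Hm Hi.
have := Hi j; rewrite (nthf_lt _ _ (proj1 Hm j)) => E.
by rewrite -[X in _ <= X]E (mono_ge (strict_of Hm' Hi') (Ordinal (proj1 Hm j))).
Qed.

Lemma iso_par (D : Cat) (deg : Arr D -> Prop)
  (Hdeg : forall a, is_iso D a -> deg a) (f : zmap D) :
  is_iso (Z D) f -> parallel_degeneracy deg f.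
Proof.
case=> Hf [g [Hg [Edg [Ecg [E1 E2]]]]].
simpl in *.
move: f g Hf Hg Edg Ecg E1 E2 => [X Y fs fr fsing] [Y' X' gs gr gsing] /= Hf Hg Edg Ecg.
subst Y' X'.
move: X Y fs fr fsing gs gr gsing Hf Hg => [n rX sX xX x'X] [m rY sY xY x'Y] /= fs fr fsing gs gr gsing Hf Hg E1 E2.
have gf : forall j : 'I_n, nthf gs 0 (fs j) = j.
  move=> j; have := congr1 (fun F => F (j : nat)) (congr1 (fun h : zmap D => fun k => nthf (zfs h) 0 k) E1).
  by rewrite /= !nthf_val.
have fg : forall j : 'I_m, nthf fs 0 (gs j) = j.
  move=> j; have := congr1 (fun F => F (j : nat)) (congr1 (fun h : zmap D => fun k => nthf (zfs h) 0 k) E2).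
  by rewrite /= !nthf_val.
have Hf' := Hf.
case: Hf => HX [HY [Hfm [Hfr [Hfsing _]]]].
case: Hg => _ [_ [Hgm [Hgr [Hgsing _]]]].
have Enm : n = m by apply/eqP; rewrite eqn_leq (len_le Hfm gf) (len_le Hgm fg).
subst m.
have Hfs : forall j, fs j = j := fs_id Hfm Hgm gf fg. have Hgs : forall j, gs j = j := fs_id Hgm Hfm fg gf.
have hatid : forall h : 'I_n -> nat, (forall j, h j = j) -> forall i : 'I_n.+1, hat h i = i.
  move=> h Hh i; rewrite /hat (@find_iota_ge _ _ _ i) ?subn0 //.
    by rewrite add0n leq0n /= -ltnS ltn_ord.
  by move=> j /andP [_ Hj]; rewrite add0n in Hj; rewrite (nthf_lt _ _ Hj) Hh.
split; first exact: Hf'.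
split; first by split.
split.
  move=> i /=; apply: Hdeg.
  have R1 := congr1 (fun F => F (i:nat)) (congr1 (fun h : zmap D => fun k => nthf (zfr h) (zfr h ord0) k) E1).
  have R2 := congr1 (fun F => F (i:nat)) (congr1 (fun h : zmap D => fun k => nthf (zfr h) (zfr h ord0) k) E2).
  rewrite /= !nthf_val (hatid _ Hgs) !nthf_val in R1.
  rewrite /= !nthf_val (hatid _ Hfs) !nthf_val in R2.
  case: (Hfr i) => Afr [Dfr Cfr]; case: (Hgr i) => Agr [Dgr Cgr].
  rewrite (hatid _ Hfs) nthf_val in Dfr; rewrite (hatid _ Hgs) nthf_val in Dgr.
  split => //; exists (gr i); rewrite Dfr Cfr Dgr Cgr; do !split => //.
move=> j /=; apply: Hdeg.
have R1 := congr1 (fun F => F (j:nat)) (congr1 (fun h : zmap D => fun k => nthf (zfsing h) (zfr h ord0) k) E1).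
have R2 := congr1 (fun F => F (j:nat)) (congr1 (fun h : zmap D => fun k => nthf (zfsing h) (zfr h ord0) k) E2).
rewrite /= !nthf_val Hfs !nthf_val in R1.
rewrite /= !nthf_val Hgs !nthf_val in R2.
case: (Hfsing j) => Afr [Dfr Cfr]; case: (Hgsing j) => Agr [Dgr Cgr].
rewrite /= Hfs nthf_val in Cfr; rewrite /= Hgs nthf_val in Cgr.
split => //; exists (gsing j); rewrite Dfr Cfr Dgr Cgr; do !split => //.
Qed.

Theorem lemma3p4 (C : Cat) (n : nat) (f : Arr (Zn n C)) :
  is_category C -> is_iso (Zn n C) f -> degeneracy C n f.
Proof.
move=> _; elim: n f => [|k IH] f Hf //=.
apply: cc_gen; right; exact: iso_par IH f Hf.
Qed.
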